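(* Let $X$ be a finite-dimensional simplicial complex such that for all vertices $x,y$ of $X$, $\Sigma_x\subseteq\Sigma_y$ implies $x=y$. Then $X$ is simplicially isomorphic to $\mathcal{N}(\mathcal{N}(X))$.
   Context: For a vertex $x$ of $X$, $\Sigma_x$ is the collection of maximal simplices of $X$ containing $x$. A maximal simplex of a simplicial complex $Y$ is a maximal collection of vertices such that every finite subset is a simplex of $Y$. For a simplicial complex $Y$, $\mathcal{N}(Y)$ is the nerve of the collection of maximal simplices of $Y$: its vertices are the maximal simplices of $Y$, and a finite set of them is a simplex iff their common intersection is non-empty. *)

(* Defs.v *)
From mathcomp Require Import all_boot.
From mathcomp Require Import boolp classical_sets cardinality.
Set Implicit Arguments. Unset Strict Implicit. Unset Printing Implicit Defensive.
Local Open Scope classical_set_scope.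

Record sc := SC { vert : Type; simplex : set (set vert) }.
Arguments simplex : clear implicits.

Definition is_sc (K : sc) : Prop :=
  [/\ (forall s, simplex K s -> finite_set s /\ s !=set0),
      (forall s t, simplex K s -> t `<=` s -> t !=set0 -> simplex K t)
    & (forall v : vert K, simplex K [set v])].

Definition finite_dim (K : sc) : Prop :=
  exists n : nat, forall s, simplex K s -> (s #<= `I_n)%card.

Definition fin_closed (K : sc) (A : set (vert K)) : Prop :=
  forall B, finite_set B -> B !=set0 -> B `<=` A -> simplex K B.

Definition maxsimp (K : sc) (M : set (vert K)) : Prop :=
  [/\ M !=set0, @fin_closed K M
    & forall M', @fin_closed K M' -> M `<=` M' -> M' = M].

Definition Sigma (K : sc) (x : vert K) : set (set (vert K)) :=
  [set M | @maxsimp K M /\ M x].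

Definition nerve (K : sc) : sc :=
  @SC {M : set (vert K) | @maxsimp K M}
      (fun s => [/\ finite_set s, s !=set0
                  & exists x : vert K, forall M, s M -> proj1_sig M x]).

Definition sc_iso (K L : sc) : Prop :=
  exists f : vert K -> vert L,
    bijective f /\ forall s : set (vert K), simplex K s <-> simplex L (f @` s).

(* Main.v *)
Require Import Defs.
From mathcomp Require Import all_boot.
From mathcomp Require Import boolp classical_sets cardinality.
Local Open Scope classical_set_scope.
Local Open Scope card_scope.
Set Implicit Arguments. Unset Strict Implicit.

Lemma size_bound (X : sc) (n k : nat) (A : set (vert X)) (g : nat -> vert X) :
  (forall s, simplex X s -> (s #<= `I_n)) -> fin_closed A ->
  {in `I_k &, injective g} -> g @` `I_k `<=` A -> (k <= n)%N.
Proof.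
move=> hd hA gi gA.
case: k gi gA => [|k] gi gA; first by [].
have hs : simplex X (g @` `I_k.+1).
  apply: hA => //; first exact/finite_image/finite_II.
  by exists (g 0%N); exists 0%N.
have h1 := hd _ hs.
have := inj_card_eq gi; rewrite card_eq_le => /andP[_ h2].
by rewrite -card_le_II; apply: card_le_trans h2 h1.
Qed.

Lemma ext_step (X : sc) (k : nat) (A : set (vert X)) (g : nat -> vert X) v :
  {in `I_k &, injective g} -> g @` `I_k `<=` A -> A v -> ~ (g @` `I_k) v ->
  exists g', {in `I_k.+1 &, injective g'} /\ g' @` `I_k.+1 `<=` A.
Proof.
move=> gi gA Av nv.
exists (fun i => if i == k then v else g i); split.
  move=> x y; rewrite !in_setE /= !ltnS => hx hy.
  case: eqP => [->|/eqP xk]; case: eqP => [->|/eqP yk] //.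
  - by move=> e; exfalso; apply: nv; exists y => //=; rewrite ltn_neqAle yk.
  - by move=> e; exfalso; apply: nv; exists x => //=; rewrite ltn_neqAle xk.
  apply: gi; rewrite in_setE /= ltn_neqAle; apply/andP; split => //.
move=> t [i hi <-]; case: eqP => [_|/eqP ik] //; apply: gA; exists i => //=.
by rewrite ltn_neqAle ik /= -ltnS.
Qed.

From mathcomp Require Import zify.

Lemma ext_max (X : sc) (n : nat) (B : set (vert X)) v :
  (forall s, simplex X s -> (s #<= `I_n)) -> fin_closed B -> B v ->
  exists k (g : nat -> vert X), [/\ fin_closed (g @` `I_k), B `<=` g @` `I_k &
    forall A', fin_closed A' -> g @` `I_k `<=` A' -> A' = g @` `I_k].
Proof.
move=> hd fB Bv.
pose P k := exists A (g : nat -> vert X),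
  [/\ fin_closed A, B `<=` A, {in `I_k &, injective g} & g @` `I_k `<=` A].
have P0 : P 0%N.
  exists B, (fun _ => v); split => //; first by move=> x y; rewrite in_setE.
  by move=> t [i hi]; exfalso; move: hi; rewrite /= ltn0.
have Pb : forall k, P k -> (k <= n)%N.
  by move=> k [A [g [fA _ gi gA]]]; apply: size_bound hd fA gi gA.
have : exists k, P k /\ ~ P k.+1.
  suff H : forall m k, (n - k <= m)%N -> P k -> exists k, P k /\ ~ P k.+1.
    by apply: (H n 0%N) => //; rewrite subn0.
  elim => [|m IH] k hk Pk.
    exists k; split => // Pk1; have := Pb _ Pk1; lia.
  have [Pk1|nPk1] := pselect (P k.+1); last by exists k.
  by apply: (IH k.+1) => //; lia.
case=> k [[A [g [fA BA gi gA]]] nP].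
have eA : A = g @` `I_k.
  apply/seteqP; split => // w Aw; apply: contrapT => nw; apply: nP.
  have [g' [g'i g'A]] := ext_step gi gA Aw nw.
  by exists A, g'.
move: fA BA; rewrite eA => fA BA.
exists k, g; split => // A' fA' sA'.
apply/seteqP; split => // w A'w; apply: contrapT => nw; apply: nP.
have [g' [g'i g'A]] := ext_step gi sA' A'w nw.
by exists A', g'; split => //; apply: subset_trans BA sA'.
Qed.

Lemma ext_maxsimp (X : sc) (n : nat) (B : set (vert X)) v :
  (forall s, simplex X s -> (s #<= `I_n)) -> fin_closed B -> B v ->
  exists M, maxsimp M /\ B `<=` M.
Proof.
move=> hd fB Bv; have [k [g [fA BA mA]]] := ext_max hd fB Bv.
exists (g @` `I_k); split => //; split => //.
by exists v; apply: BA.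
Qed.

Lemma maxsimp_fin (X : sc) (n : nat) (M : set (vert X)) :
  (forall s, simplex X s -> (s #<= `I_n)) -> maxsimp M -> finite_set M.
Proof.
move=> hd [[v Mv] fM mM]; have [k [g [fA BA mA]]] := ext_max hd fM Mv.
by rewrite -(mM _ fA BA); apply/finite_image/finite_II.
Qed.

Lemma simplex_fc (X : sc) (s : set (vert X)) : is_sc X -> simplex X s -> fin_closed s.
Proof. by case=> _ h2 _ hs B _ nB sB; apply: h2 hs sB nB. Qed.


Lemma helly (X : sc) (n : nat) (S : set (vert (nerve X))) :
  (forall s, simplex X s -> (s #<= `I_n)) -> fin_closed S -> S !=set0 ->
  exists y, forall V, S V -> proj1_sig V y.
Proof.
move=> hd fS [V0 SV0].
apply: contrapT => H.
have H' : forall y, exists V, S V /\ ~ proj1_sig V y.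
  move=> y; apply: contrapT => H1; apply: H; exists y => V SV.
  by apply: contrapT => nV; apply: H1; exists V.
have [h hh] := choice H'.
pose F := [set V0] `|` (h @` proj1_sig V0).
have : simplex (nerve X) F.
  apply: fS.
  - rewrite finite_setU; split; first exact: finite_set1.
    by apply: finite_image; apply: maxsimp_fin hd (proj2_sig V0).
  - by exists V0; left.
  - by move=> V [->|[y _ <-]] //; case: (hh y).
case=> _ _ [x Hx].
have V0x : proj1_sig V0 x by apply: Hx; left.
by case: (hh x) => _; apply; apply: Hx; right; exists x.
Qed.

Definition Sig' (X : sc) (x : vert X) : set (vert (nerve X)) :=
  [set V | proj1_sig V x].

Lemma sig_max (X : sc) (n : nat) (x : vert X) :
  is_sc X -> (forall s, simplex X s -> (s #<= `I_n)) ->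
  (forall x y : vert X, Sigma x `<=` Sigma y -> x = y) ->
  maxsimp (Sig' x).
Proof.
move=> hX hd hS.
have ne : Sig' x !=set0.
  case: (hX) => _ _ h3.
  have [M [mM sM]] := ext_maxsimp hd (simplex_fc hX (h3 x)) (erefl : [set x] x).
  by exists (exist _ M mM); apply: sM.
have fc : fin_closed (Sig' x).
  by move=> B fB nB sB; split => //; exists x.
split => // M' fM' sM'.
have [y Hy] := helly hd fM' (subset_nonempty sM' ne).
have exy : x = y.
  apply: hS => M [mM Mx].
  by split => //; apply: (Hy (exist _ M mM)); apply: sM'.
subst y; apply/seteqP; split => //.
Qed.

Local Close Scope card_scope.
Theorem theorem3p1 (X : sc) :
  is_sc X -> finite_dim X ->
  (forall x y : vert X, Sigma x `<=` Sigma y -> x = y) ->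
  sc_iso X (nerve (nerve X)).
Proof.
move=> hX [n hd] hS.
pose f (x : vert X) : vert (nerve (nerve X)) := exist _ (Sig' x) (sig_max x hX hd hS).
have finj : injective f.
  move=> x y /(congr1 (@proj1_sig _ _)) /= e.
  apply (hS x y) => M [mM Mx]; split => //.
  have : Sig' y (exist _ M mM) by rewrite -e.
  by [].
have fsurj : forall V, exists x, f x = V.
  case=> S pS; have [[V0 SV0] fS mS] := pS.
  have [y Hy] := helly hd fS (ex_intro _ V0 SV0).
  exists y; apply: eq_exist.
  have [_ fy _] := sig_max y hX hd hS.
  by apply: mS => // V SV; apply: Hy.
have [g hg] := choice fsurj.
exists f; split.
  by exists g => [x|V] //; apply: finj; rewrite hg.
move=> s; split.
  move=> hs; case: (hX) => h1 _ _; have [fs [v sv]] := h1 _ hs.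
  have [M [mM sM]] := ext_maxsimp hd (simplex_fc hX hs) sv.
  split; first exact: finite_image.
    by exists (f v); exists v.
  by exists (exist _ M mM) => V [x sx <-] /=; apply: sM.
case=> fi [V [v sv _]] [M0 HM].
have := (proj2_sig M0).
case=> _ fM _; apply: fM.
- have := @inj_card_eq _ _ s f (in2W finj).
  case: fi => m hm e; exists m; exact: card_eq_trans (card_esym e) hm.
- by exists v.
- by move=> x sx; apply: (HM (f x)); exists x.
Qed.
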